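(* Let $K\ge1$, $A=\{1,\dots,K\}$, let $d\ge1$ be an integer, $0<\delta\le 1/d$ and $0<\eta\le\frac{1}{Ke(d+1)}$. Consider the update: $w_1(i)=1$, $W_t=\sum_j w_t(j)$, $\widetilde p_t(i)=\max\{w_t(i)/W_t,\delta/K\}$, $\widetilde P_t=\sum_j\widetilde p_t(j)$, $p_t(i)=\widetilde p_t(i)/\widetilde P_t$, $w_{t+1}(i)=p_t(i)\exp(-\eta\widehat\ell_t(i))$, where $$\widehat\ell_t(i)=\begin{cases}\dfrac{\ell_{t-d}(i)}{q_{t-d}(i)}B_{t-d}(i)&t>d,\\0&\text{otherwise,}\end{cases}$$ with $\ell_s(i)\in[0,1]$, $B_s(i)\in\{0,1\}$ and $q_s(i)\ge p_s(i)$ for all $s,i$. Then for all $t\ge1$ and $i\in A$, $$p_{t+1}(i)\le\Bigl(1+\frac1d\Bigr)p_t(i).$$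
   Context: The statement holds deterministically for every realization of the $\ell_s,B_s,q_s$ satisfying the stated conditions. *)

(* Defs.v *)
(* real numbers with exp. Arms A = {1..K} are encoded as nat i with i < K. *)
From Stdlib Require Import Reals Lra List.
Import ListNotations.
Open Scope R_scope.

Definition sumA (K : nat) (f : nat -> R) : R :=
  fold_right Rplus 0 (map f (seq 0 K)).

Definition ptilde (K : nat) (delta : R) (wf : nat -> R) (i : nat) : R :=
  Rmax (wf i / sumA K wf) (delta / INR K).

Definition pw (K : nat) (delta : R) (wf : nat -> R) (i : nat) : R :=
  ptilde K delta wf i / sumA K (ptilde K delta wf).

Definition lhat (d : nat) (ell : nat -> nat -> R) (B : nat -> nat -> bool)
    (q : nat -> nat -> R) (t i : nat) : R :=
  if (d <? t)%nat then
    ell (t - d)%nat i / q (t - d)%nat i * (if B (t - d)%nat i then 1 else 0)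
  else 0.

(* weights w_t, t >= 1 (w_0 is a junk value) *)
Fixpoint weight (K d : nat) (delta eta : R) (ell : nat -> nat -> R)
    (B : nat -> nat -> bool) (q : nat -> nat -> R) (t : nat) : nat -> R :=
  match t with
  | O => fun _ => 1
  | S O => fun _ => 1
  | S t' => fun i =>
      pw K delta (weight K d delta eta ell B q t') i
        * exp (- eta * lhat d ell B q t' i)
  end.

Definition prob (K d : nat) (delta eta : R) (ell : nat -> nat -> R)
    (B : nat -> nat -> bool) (q : nat -> nat -> R) (t i : nat) : R :=
  pw K delta (weight K d delta eta ell B q t) i.

(* Main.v *)
Require Import Defs.
From Stdlib Require Import Reals Lra List Lia.
Open Scope R_scope.

Definition lsum (l : list nat) (f : nat -> R) := fold_right Rplus 0 (map f l).

Lemma lsum_le l f g : (forall j, In j l -> f j <= g j) -> lsum l f <= lsum l g.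
Proof.
  induction l as [|a l IH]; simpl; intros H; unfold lsum in *; simpl. lra.
  apply Rplus_le_compat. apply H; auto. apply IH; intros; apply H; auto.
Qed.

Lemma lsum_ext l f g : (forall j, In j l -> f j = g j) -> lsum l f = lsum l g.
Proof. intros H; apply Rle_antisym; apply lsum_le; intros j Hj; rewrite H; auto; lra. Qed.

Lemma lsum_plus l f g : lsum l (fun j => f j + g j) = lsum l f + lsum l g.
Proof. induction l; unfold lsum in *; simpl; [lra|]. rewrite IHl; lra. Qed.

Lemma lsum_scal l c f : lsum l (fun j => c * f j) = c * lsum l f.
Proof. induction l; unfold lsum in *; simpl; [lra|]. rewrite IHl; lra. Qed.

Lemma lsum_const l c : lsum l (fun _ => c) = INR (length l) * c.
Proof.
  induction l; unfold lsum in *; simpl; [lra|]. rewrite IHl.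
  destruct (length l); simpl; lra.
Qed.

Lemma lsum_pos l f : l <> nil -> (forall j, In j l -> 0 < f j) -> 0 < lsum l f.
Proof.
  induction l as [|a l IH]; intros Hn H; [congruence|]. unfold lsum in *; simpl.
  destruct l as [|b l'].
  - simpl. specialize (H a (or_introl eq_refl)). lra.
  - assert (0 < fold_right Rplus 0 (map f (b :: l'))) by
      (apply IH; [congruence| intros; apply H; simpl in *; tauto]).
    specialize (H a (or_introl eq_refl)). lra.
Qed.

Lemma sumA_lsum K f : sumA K f = lsum (seq 0 K) f.
Proof. reflexivity. Qed.

Lemma inK K j : In j (seq 0 K) -> (j < K)%nat.
Proof. intros H; apply in_seq in H; lia. Qed.

Lemma sumA_le K f g : (forall j, (j < K)%nat -> f j <= g j) -> sumA K f <= sumA K g.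
Proof. intros H; apply lsum_le; intros j Hj; apply H, (inK K j Hj). Qed.

Lemma sumA_const K c : sumA K (fun _ => c) = INR K * c.
Proof. unfold sumA. fold (lsum (seq 0 K) (fun _ => c)). rewrite lsum_const, length_seq; auto. Qed.

Lemma sumA_pos K f : (1 <= K)%nat -> (forall j, (j < K)%nat -> 0 < f j) -> 0 < sumA K f.
Proof.
  intros HK H; apply lsum_pos.
  - destruct K; [lia|]. simpl; congruence.
  - intros j Hj; apply H, (inK K j Hj).
Qed.

Section G.
Variables (K : nat) (delta : R).
Hypothesis HK : (1 <= K)%nat.
Hypothesis Hd : 0 < delta.

Lemma INRK_pos : 0 < INR K.
Proof. apply lt_0_INR; lia. Qed.

Lemma pt_ge wf i : delta / INR K <= ptilde K delta wf i.
Proof. unfold ptilde; apply Rmax_r. Qed.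

Lemma dK_pos : 0 < delta / INR K.
Proof. pose proof INRK_pos. apply Rdiv_lt_0_compat; lra. Qed.

Lemma sumpt_pos wf : 0 < sumA K (ptilde K delta wf).
Proof. apply sumA_pos; auto; intros; pose proof (pt_ge wf j); pose proof dK_pos; lra. Qed.

Lemma pw_pos wf i : 0 < pw K delta wf i.
Proof.
  unfold pw. apply Rdiv_lt_0_compat. pose proof (pt_ge wf i); pose proof dK_pos; lra.
  apply sumpt_pos.
Qed.

Lemma sum_pw wf : sumA K (pw K delta wf) = 1.
Proof.
  pose proof (sumpt_pos wf).
  unfold pw.
  transitivity (sumA K (fun j => / sumA K (ptilde K delta wf) * ptilde K delta wf j)).
  - apply lsum_ext; intros; unfold Rdiv; ring.
  - rewrite sumA_lsum, lsum_scal, <- sumA_lsum. field; lra.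
Qed.

Lemma sumpt_ge1 wf : (forall j, (j < K)%nat -> 0 <= wf j) -> 0 < sumA K wf ->
  1 <= sumA K (ptilde K delta wf).
Proof.
  intros H0 HW.
  apply Rle_trans with (sumA K (fun j => / sumA K wf * wf j)).
  - rewrite sumA_lsum, lsum_scal, <- sumA_lsum. right; field; lra.
  - apply sumA_le; intros j Hj; unfold ptilde. eapply Rle_trans; [|apply Rmax_l].
    right; unfold Rdiv; ring.
Qed.

Lemma sumpt_le wf : (forall j, (j < K)%nat -> 0 <= wf j) -> 0 < sumA K wf ->
  sumA K (ptilde K delta wf) <= 1 + delta.
Proof.
  intros H0 HW. pose proof INRK_pos.
  apply Rle_trans with (sumA K (fun j => / sumA K wf * wf j + delta / INR K)).
  - apply sumA_le; intros j Hj; unfold ptilde. apply Rmax_lub.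
    + pose proof dK_pos; unfold Rdiv; lra.
    + assert (0 <= / sumA K wf * wf j). { apply Rmult_le_pos; [left; apply Rinv_0_lt_compat; lra| auto]. } lra.
  - rewrite sumA_lsum, lsum_plus, lsum_scal, <- !sumA_lsum, sumA_const. right; field; lra.
Qed.

Lemma pw_le_pt wf i : (forall j, (j < K)%nat -> 0 <= wf j) -> 0 < sumA K wf ->
  pw K delta wf i <= ptilde K delta wf i.
Proof.
  intros H0 HW. pose proof (sumpt_ge1 wf H0 HW). unfold pw.
  pose proof (pt_ge wf i); pose proof dK_pos.
  apply Rmult_le_reg_r with (sumA K (ptilde K delta wf)). lra.
  unfold Rdiv; rewrite Rmult_assoc, Rinv_l by lra. nra.
Qed.

Lemma pw_ge wf i : (forall j, (j < K)%nat -> 0 <= wf j) -> 0 < sumA K wf ->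
  delta / INR K <= (1 + delta) * pw K delta wf i.
Proof.
  intros H0 HW. pose proof (sumpt_le wf H0 HW). pose proof (sumpt_pos wf). unfold pw.
  pose proof (pt_ge wf i); pose proof dK_pos.
  apply Rle_trans with (sumA K (ptilde K delta wf) * (ptilde K delta wf i / sumA K (ptilde K delta wf))).
  - eapply Rle_trans; [exact H2|]. right; field; lra.
  - apply Rmult_le_compat_r; [|lra]. left; apply Rdiv_lt_0_compat; lra.
Qed.
End G.

Lemma exp_pow x n : exp x ^ n = exp (INR n * x).
Proof.
  induction n; simpl. rewrite Rmult_0_l, exp_0; auto.
  rewrite IHn, <- exp_plus. f_equal. destruct n; simpl; ring.
Qed.

Theorem mainTheorem6 (K d : nat) (delta eta : R)
    (ell : nat -> nat -> R) (B : nat -> nat -> bool) (q : nat -> nat -> R) :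
  (1 <= K)%nat -> (1 <= d)%nat ->
  0 < delta -> delta <= 1 / INR d ->
  0 < eta -> eta <= 1 / (INR K * exp 1 * (INR d + 1)) ->
  (forall s i, (i < K)%nat -> 0 <= ell s i <= 1) ->
  (forall s i, (1 <= s)%nat -> (i < K)%nat ->
      prob K d delta eta ell B q s i <= q s i) ->
  forall t i, (1 <= t)%nat -> (i < K)%nat ->
    prob K d delta eta ell B q (t + 1) i
      <= (1 + 1 / INR d) * prob K d delta eta ell B q t i.
Proof.
  intros HK Hd1 Hdel Hdel2 Heta Heta2 Hell Hq.
  set (w := weight K d delta eta ell B q).
  set (p := prob K d delta eta ell B q).
  set (L := lhat d ell B q).
  set (c := 1 + 1 / INR d).
  assert (HdR : 1 <= INR d) by (apply (le_INR 1); lia).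
  assert (HKR : 1 <= INR K) by (apply (le_INR 1); lia).
  assert (He1 : 1 <= exp 1) by (pose proof (exp_ineq1_le 1); lra).
  assert (Hc : 0 <= c) by (unfold c; assert (0 < 1 / INR d) by (apply Rdiv_lt_0_compat; lra); lra).
  assert (wS : forall t j, (1 <= t)%nat -> w (S t) j = p t j * exp (- eta * L t j)).
  { intros t j Ht. destruct t; [lia|]. reflexivity. }
  assert (wpos : forall t j, 0 < w t j).
  { intros t j. destruct t as [|[|t]]; try (unfold w; simpl; lra).
    change (w (S (S t)) j) with (pw K delta (w (S t)) j * exp (- eta * L (S t) j)).
    apply Rmult_lt_0_compat; [apply pw_pos; auto | apply exp_pos]. }
  assert (w0 : forall t j, (j < K)%nat -> 0 <= w t j) by (intros; left; auto).
  assert (wsum : forall t, 0 < sumA K (w t)) by (intros; apply sumA_pos; auto).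
  assert (ppos : forall t j, 0 < p t j) by (intros; apply pw_pos; auto).
  assert (psum : forall t, sumA K (p t) = 1) by (intros; apply sum_pw; auto).
  assert (main : forall n t, (t <= n)%nat -> (1 <= t)%nat -> forall i, (i < K)%nat ->
     p (t + 1)%nat i <= c * p t i).
  2: { intros t i Ht Hi; apply (main t t); auto. }
  induction n as [|n IHn]; intros t Htn Ht i Hi; [lia|].
  assert (IH : forall s, (1 <= s)%nat -> (s < t)%nat -> forall i, (i < K)%nat ->
     p (s + 1)%nat i <= c * p s i) by (intros; apply (IHn s); auto; lia).
  assert (chain : forall m s j, (j < K)%nat -> (1 <= s)%nat -> (s + m <= t)%nat ->
     p (s + m)%nat j <= c ^ m * p s j).
  { induction m; intros s j Hj Hs Hsm.
    - rewrite Nat.add_0_r; simpl; lra.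
    - replace (s + S m)%nat with ((s + m) + 1)%nat by lia.
      eapply Rle_trans. apply IH; auto; lia.
      simpl. rewrite Rmult_assoc. apply Rmult_le_compat_l; auto. apply IHm; auto; lia. }
  assert (cd : c ^ d <= exp 1).
  { eapply Rle_trans. apply pow_incr. split. exact Hc. apply (exp_ineq1_le (1 / INR d)).
    rewrite exp_pow. right; f_equal; field; lra. }
  assert (Lnn : forall j, (j < K)%nat -> 0 <= L t j /\ p t j * L t j <= exp 1).
  { intros j Hj. unfold L, lhat. destruct (Nat.ltb_spec d t) as [Hdt|Hdt].
    2: { split; lra. }
    assert (Hs : (1 <= t - d)%nat) by lia.
    pose proof (Hq (t - d)%nat j Hs Hj). pose proof (ppos (t - d)%nat j).
    pose proof (Hell (t - d)%nat j Hj).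
    assert (Hpt : p t j <= exp 1 * p (t - d)%nat j).
    { replace t with ((t - d) + d)%nat at 1 by lia.
      eapply Rle_trans. apply chain; auto; lia.
      apply Rmult_le_compat_r; [left; auto | auto]. }
    assert (Hq2 : p (t - d)%nat j <= q (t - d)%nat j) by (apply Hq; auto). assert (Hqp : 0 < q (t - d)%nat j) by lra.
    assert (Hb : 0 <= ell (t - d)%nat j / q (t - d)%nat j * (if B (t - d)%nat j then 1 else 0)
                 <= / q (t - d)%nat j).
    { pose proof (Rinv_0_lt_compat _ Hqp).
      destruct (B (t - d)%nat j); unfold Rdiv; split; nra. }
    split; [lra|].
    pose proof (ppos t j).
    apply Rle_trans with (p t j * / q (t - d)%nat j). apply Rmult_le_compat_l; lra.
    apply Rle_trans with (p t j * / p (t - d)%nat j).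
    apply Rmult_le_compat_l; [lra|]. apply Rinv_le_contravar; auto.
    apply Rmult_le_reg_r with (p (t - d)%nat j); auto.
    rewrite Rmult_assoc, Rinv_l by lra. lra. }
  assert (HW : INR d / (INR d + 1) <= sumA K (w (S t))).
  { apply Rle_trans with (sumA K (fun j => p t j + - (eta * exp 1))).
    - rewrite sumA_lsum, lsum_plus, <- !sumA_lsum, sumA_const, psum.
      assert (eta * (INR K * exp 1 * (INR d + 1)) <= 1).
      { assert (Hpos : 0 < INR K * exp 1 * (INR d + 1)) by (repeat apply Rmult_lt_0_compat; lra).
        apply Rmult_le_reg_r with (/ (INR K * exp 1 * (INR d + 1))).
        apply Rinv_0_lt_compat; lra. rewrite Rmult_assoc, Rinv_r by lra. unfold Rdiv in Heta2. lra. }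
      apply Rle_trans with (1 - 1 / (INR d + 1)). right; field; lra.
      assert (INR K * (eta * exp 1) * (INR d + 1) <= 1) by lra.
      assert (INR K * (eta * exp 1) <= 1 / (INR d + 1)).
      { apply Rmult_le_reg_r with (INR d + 1). lra. replace (1 / (INR d + 1) * (INR d + 1)) with 1 by (field; lra). lra. }
      lra.
    - apply sumA_le; intros j Hj. rewrite wS by auto.
      destruct (Lnn j Hj) as [H1 H2]. pose proof (ppos t j).
      pose proof (exp_ineq1_le (- eta * L t j)).
      assert (p t j * (1 + - eta * L t j) <= p t j * exp (- eta * L t j)) by (apply Rmult_le_compat_l; lra).
      nra. }
  assert (HW' : / sumA K (w (S t)) <= c).
  { unfold c. apply Rle_trans with (/ (INR d / (INR d + 1))).
    apply Rinv_le_contravar; auto. apply Rdiv_lt_0_compat; lra.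
    right; field; lra. }
  replace (t + 1)%nat with (S t) by lia.
  unfold p at 1, prob. fold w.
  eapply Rle_trans. apply pw_le_pt; auto.
  unfold ptilde. apply Rmax_lub.
  - rewrite wS by auto. destruct (Lnn i Hi) as [H1 _].
    assert (exp (- eta * L t i) <= 1).
    { rewrite <- exp_0. destruct (Req_dec (eta * L t i) 0) as [E|E].
      - right; f_equal; lra.
      - left; apply exp_increasing. assert (0 <= eta * L t i) by nra. lra. }
    pose proof (ppos t i). pose proof (wsum (S t)).
    pose proof (exp_pos (- eta * L t i)).
    unfold Rdiv. apply Rle_trans with (p t i * / sumA K (w (S t))).
    + apply Rmult_le_compat_r. left; apply Rinv_0_lt_compat; auto. nra.
    + rewrite Rmult_comm. apply Rmult_le_compat_r; lra.
  - destruct t as [|t']; [lia|].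
    pose proof (pw_ge K delta HK Hdel (w (S t')) i (w0 _) (wsum _)).
    change (pw K delta (w (S t')) i) with (p (S t') i) in H.
    pose proof (ppos (S t') i).
    assert ((1 + delta) * p (S t') i <= (1 + 1 / INR d) * p (S t') i) by (apply Rmult_le_compat_r; lra).
    unfold c; lra.
Qed.
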